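(* Let $\mathcal M=(Q,s_{in},s_T,s_F,\delta)$ be a Turing machine with input that never moves its input head outside the input tape. There is a closed term ${\tt trans}_{\mathcal M}$ and a constant $c$ (depending only on $\mathcal M$) such that for every term $k$ and every configuration $C$ with input tape string $i$ (with $0\le n<|i|$ for its input-head position $n$): (1) if $C$ is final, then ${\tt trans}_{\mathcal M}\,k\,\ulcorner C\urcorner\to_{det}^{m} k\,\ulcorner C\urcorner$ for some $m\le c\,|i|\log_2|i|$; (2) if $C\to_{\mathcal M} D$, then ${\tt trans}_{\mathcal M}\,k\,\ulcorner C\urcorner\to_{det}^{m} {\tt trans}_{\mathcal M}\,k\,\ulcorner D\urcorner$ for some $m\le c\,|i|\log_2|i|$.
   Context: Deterministic $\lambda$-calculus $\Lambda_{\tt det}$: terms $t ::= v \mid t\,v$, values $v ::= x\mid \lambda x.t$, evaluation contexts $E ::= [\cdot]\mid E\,v$, and $E[(\lambda x.t)v]\to_{det} E[t\{x:=v\}]$; $\to_{det}^m$ means exactly $m$ steps. Encodings: a character $a_j$ of an ordered alphabet $\Sigma=\{a_1<\dots<a_p\}$ is $\ulcorner a_j\urcorner:=\lambda x_1\ldots\lambda x_p.x_j$; strings over $\Sigma$ are $\ulcorner\varepsilon\urcorner:=\lambda x_1\ldots\lambda x_p.\lambda x_\varepsilon.x_\varepsilon$, $\ulcorner a_j r\urcorner:=\lambda x_1\ldots\lambda x_p.\lambda x_\varepsilon.x_j\ulcorner r\urcorner$. Reversed binary: $\mathrm{bin}(0)=\varepsilon$, for $n>0$ $\mathrm{bin}(n)=b_0\cdots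 b_\ell$ with $n=\sum_j b_j 2^j$, $b_\ell=1$, encoded as a string over $\{0<1\}$. Turing machines with input: $\mathbb B_I=\{0<1<\mathsf L<\mathsf R\}$, $\mathbb B_W=\{0<1<\Box\}$ ($\Box$ blank). A machine is $\mathcal M=(Q,s_{in},s_T,s_F,\delta)$ with finite ordered set of states $Q=\{s_1<\dots<s_m\}$, initial state $s_{in}$, final states $s_T,s_F$, and partial transition function $\delta:\mathbb B_I\times\mathbb B_W\times Q\rightharpoonup\{-1,+1,0\}\times\mathbb B_W\times\{\leftarrow,\rightarrow,\downarrow\}\times Q$, defined on $(b,a,s)$ only if $s\notin\{s_T,s_F\}$. A configuration is $(i,n\mid w_l,a,w_r\mid s)$ with $i=\mathsf L s'\mathsf R$, $s'\in\{0,1\}^*$, the read-only input tape string, $n\in\mathbb N$ the input-head position, $w_l,w_r\in\mathbb B_W^*$ the work tape to the left/right of the work head, $a\in\mathbb B_W$ the work-head cell, $s\in Q$; it is final if $s\in\{s_T,s_F\}$. Transition: let $b$ be the character of $i$ at position $n$ (counting from $0$) and $\delta(b,a,s)=(d\mid a',\mu\mid s')$. Then $C\to_{\mathcal M} D$ where $D$ has input position $n+d$, state $s'$, and work part: if $\mu=\downarrow$, $(w_l,a',w_r)$; if $\mu=\leftarrow$ and $w_l=w a''$, $(w,a'',a'w_r)$, and if $w_l=\varepsilon$, $(\varepsilon,\Box,a'w_r)$; if $\mu=\rightarrow$ and $w_r=a''w$, $(w_l a',a'',w)$, and if $w_r=\varepsilon$, $(w_la',\Box,\varepsilon)$. The input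 string $i$ is unchanged. The encoding of a configuration is $\ulcorner(i,n\mid w_l,a,w_r\mid s)\urcorner:=\lambda x.\,x\,\ulcorner i\urcorner\,\ulcorner\mathrm{bin}(n)\urcorner\,\ulcorner w_l^{R}\urcorner\,\ulcorner a\urcorner\,\ulcorner w_r\urcorner\,\ulcorner s\urcorner$, with $i$ encoded as a string over $\mathbb B_I$, $w_l^R$ (reversal of $w_l$) and $w_r$ as strings over $\mathbb B_W$, $a$ as a character of $\mathbb B_W$, $s$ as a character of $Q$. Note $|i|\ge 2$. *)

(* Defs.v *)
From Stdlib Require Import List Arith NArith Reals.
From mathcomp Require Import ssreflect ssrbool eqtype fintype.
Import ListNotations.

Inductive value : Type :=
| Var : nat -> value
| Lam : term -> value
with term : Type :=
| Val : value -> term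
| App : term -> value -> term.

Fixpoint liftV (c : nat) (w : value) : value :=
  match w with
  | Var n => if Nat.ltb n c then Var n else Var (S n)
  | Lam t => Lam (liftT (S c) t)
  end
with liftT (c : nat) (t : term) : term :=
  match t with
  | Val w => Val (liftV c w)
  | App t1 w => App (liftT c t1) (liftV c w)
  end.

(* capture-avoiding substitution of s for index j (and lowering of the
   indices above j, since the binder of j disappears) *)
Fixpoint substV (j : nat) (s : value) (w : value) : value :=
  match w with
  | Var n => if Nat.eqb n j then s
             else if Nat.ltb j n then Var (Nat.pred n) else Var n
  | Lam t => Lam (substT (S j) (liftV 0 s) t)
  end
with substT (j : nat) (s : value) (t : term) : term :=
  match t with
  | Val w => Val (substV j s w)
  | App t1 w => App (substT j s t1) (substV j s w)
  end.

Inductive step_det : term -> term -> Prop :=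
| step_beta (t : term) (v : value) :
    step_det (App (Val (Lam t)) v) (substT 0 v t)
| step_ctx (t t' : term) (v : value) :
    step_det t t' -> step_det (App t v) (App t' v).

Inductive nsteps : nat -> term -> term -> Prop :=
| nsteps0 (t : term) : nsteps 0 t t
| nstepsS (m : nat) (t u w : term) :
    step_det t u -> nsteps m u w -> nsteps (S m) t w.

Fixpoint boundV (d : nat) (w : value) : bool :=
  match w with
  | Var n => Nat.ltb n d
  | Lam t => boundT (S d) t
  end
with boundT (d : nat) (t : term) : bool :=
  match t with
  | Val w => boundV d w
  | App t1 w => boundT d t1 && boundV d w
  end.

Definition closedT (t : term) : Prop := boundT 0 t = true.

Fixpoint nlam (k : nat) (t : term) : term :=
  match k with
  | 0 => t
  | S k' => Val (Lam (nlam k' t))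
  end.

Definition lamsV (k : nat) (t : term) : value := Lam (nlam k t).

(* character with 0-based index j (i.e. a_{j+1}) of an alphabet of size p >= 1:
   \x_1 ... \x_p . x_{j+1}; x_{j+1} has de Bruijn index p-1-j *)
Definition enc_char (p j : nat) : value :=
  lamsV (p - 1) (Val (Var (p - 1 - j))).

(* strings over an alphabet of size p, characters given by 0-based indices:
   eps  = \x_1..\x_p.\x_eps. x_eps
   a_{j+1} r = \x_1..\x_p.\x_eps. x_{j+1} <r>   *)
Fixpoint enc_str (p : nat) (s : list nat) : value :=
  match s with
  | [] => lamsV p (Val (Var 0))
  | j :: r => lamsV p (App (Val (Var (p - j))) (enc_str p r))
  end.

(* reversed binary: least significant bit first, no trailing zeros, bin 0 = eps *)
Fixpoint bin_pos (q : positive) : list nat :=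
  match q with
  | xH => [1]
  | xO q' => 0 :: bin_pos q'
  | xI q' => 1 :: bin_pos q'
  end.

Definition bin (n : nat) : list nat :=
  match N.of_nat n with
  | N0 => []
  | Npos q => bin_pos q
  end.

Inductive bI : Type := I0 | I1 | IL | IR.
Definition bI_idx (b : bI) : nat :=
  match b with I0 => 0 | I1 => 1 | IL => 2 | IR => 3 end.

Inductive bW : Type := W0 | W1 | WB.
Definition bW_idx (a : bW) : nat :=
  match a with W0 => 0 | W1 => 1 | WB => 2 end.

Inductive in_dir : Type := Dm1 | Dp1 | D0.
Inductive w_dir : Type := WLeft | WRight | WStay.

(* Q = {s_1 < ... < s_m} is represented by 'I_m with its natural order *)
Record TM : Type := MkTM {
  tm_m : nat;
  tm_init : 'I_tm_m;
  tm_T : 'I_tm_m;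
  tm_F : 'I_tm_m;
  tm_delta : bI -> bW -> 'I_tm_m -> option (in_dir * bW * w_dir * 'I_tm_m)
}.

Definition tm_wf (M : TM) : Prop :=
  forall b a s, tm_delta M b a s <> None -> s <> tm_T M /\ s <> tm_F M.

Definition tm_stays_in (M : TM) : Prop :=
  forall a s d a' mu s',
    (tm_delta M IL a s = Some (d, a', mu, s') -> d <> Dm1) /\
    (tm_delta M IR a s = Some (d, a', mu, s') -> d <> Dp1).

Record config (m : nat) : Type := Config {
  c_in : list bI;
  c_pos : nat;
  c_wl : list bW;
  c_a : bW;
  c_wr : list bW;
  c_st : 'I_m
}.
Arguments Config {m}.
Arguments c_in {m}.
Arguments c_pos {m}.
Arguments c_wl {m}.
Arguments c_a {m}.
Arguments c_wr {m}.
Arguments c_st {m}.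

Definition valid_input (i : list bI) : Prop :=
  exists s' : list bI, (forall x, In x s' -> x = I0 \/ x = I1) /\ i = IL :: s' ++ [IR].

Definition is_final (M : TM) (C : config (tm_m M)) : Prop :=
  c_st C = tm_T M \/ c_st C = tm_F M.

Definition new_pos (d : in_dir) (n n' : nat) : Prop :=
  match d with
  | Dp1 => n' = S n
  | D0 => n' = n
  | Dm1 => n = S n'
  end.

Definition move_work (mu : w_dir) (wl : list bW) (a' : bW) (wr : list bW)
  : list bW * bW * list bW :=
  match mu with
  | WStay => (wl, a', wr)
  | WLeft => match rev wl with
             | [] => ([], WB, a' :: wr)
             | a'' :: w' => (rev w', a'', a' :: wr)
             end
  | WRight => match wr with
              | [] => (wl ++ [a'], WB, [])
              | a'' :: w => (wl ++ [a'], a'', w)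
              end
  end.

Definition tm_step (M : TM) (C D : config (tm_m M)) : Prop :=
  exists b d a' mu s',
    nth_error (c_in C) (c_pos C) = Some b /\
    tm_delta M b (c_a C) (c_st C) = Some (d, a', mu, s') /\
    c_in D = c_in C /\
    new_pos d (c_pos C) (c_pos D) /\
    (c_wl D, c_a D, c_wr D) = move_work mu (c_wl C) a' (c_wr C) /\
    c_st D = s'.

Definition enc_config {m : nat} (C : config m) : value :=
  Lam (App (App (App (App (App (App (Val (Var 0))
        (enc_str 4 (map bI_idx (c_in C))))
        (enc_str 2 (bin (c_pos C))))
        (enc_str 3 (map bW_idx (rev (c_wl C)))))
        (enc_char 3 (bW_idx (c_a C))))
        (enc_str 3 (map bW_idx (c_wr C))))
        (enc_char m (nat_of_ord (c_st C)))).

Definition log2R (x : R) : R := (ln x / ln 2)%R.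

(* Main.v *)
Require Import Defs.
From Stdlib Require Import List Arith Lia NArith PArith String.
Import Datatypes.
Import ListNotations.
Open Scope string_scope.

Scheme value_mut := Induction for value Sort Prop
  with term_mut := Induction for term Sort Prop.
Combined Scheme vt_mut from value_mut, term_mut.

Lemma lift_bound_gen :
  (forall w d c, boundV d w = true -> d <= c -> liftV c w = w) /\
  (forall t d c, boundT d t = true -> d <= c -> liftT c t = t).
Proof.
  apply vt_mut; simpl; intros.
  - apply Nat.ltb_lt in H. destruct (Nat.ltb_spec n c); [reflexivity| lia].
  - f_equal. apply (H (S d)); auto; lia.
  - f_equal. eauto.
  - apply Bool.andb_true_iff in H1 as [Ha Hb]. f_equal; eauto.
Qed.

Lemma subst_bound_gen :
  (forall w d j s, boundV d w = true -> d <= j -> substV j s w = w) /\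
  (forall t d j s, boundT d t = true -> d <= j -> substT j s t = t).
Proof.
  apply vt_mut; simpl; intros.
  - apply Nat.ltb_lt in H. destruct (Nat.eqb_spec n j); [lia|].
    destruct (Nat.ltb_spec j n); [lia|reflexivity].
  - f_equal. apply (H (S d)); auto; lia.
  - f_equal. eauto.
  - apply Bool.andb_true_iff in H1 as [Ha Hb]. f_equal; eauto.
Qed.

Lemma subst_lift_gen :
  (forall w c s, substV c s (liftV c w) = w) /\
  (forall t c s, substT c s (liftT c t) = t).
Proof.
  apply vt_mut; simpl; intros.
  - destruct (Nat.ltb_spec n c).
    + cbn [substV]. destruct (Nat.eqb_spec n c); [lia|]. destruct (Nat.ltb_spec c n); [lia|auto].
    + cbn [substV]. destruct (Nat.eqb_spec (S n) c); [lia|]. destruct (Nat.ltb_spec c (S n)); [auto|lia].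
  - f_equal. auto.
  - f_equal. auto.
  - f_equal; auto.
Qed.

Lemma bound_mono_gen :
  (forall w d d', boundV d w = true -> d <= d' -> boundV d' w = true) /\
  (forall t d d', boundT d t = true -> d <= d' -> boundT d' t = true).
Proof.
  apply vt_mut; simpl; intros.
  - apply Nat.ltb_lt in H. apply Nat.ltb_lt. lia.
  - apply (H (S d)); auto; lia.
  - eauto.
  - apply Bool.andb_true_iff in H1 as [Ha Hb]. apply Bool.andb_true_iff; split; eauto.
Qed.

Definition cl (w : value) := boundV 0 w = true.

Lemma liftV_cl w c : boundV 0 w = true -> liftV c w = w.
Proof. intro H. apply (proj1 lift_bound_gen w 0); auto; lia. Qed.
Lemma substV_cl w j s : boundV 0 w = true -> substV j s w = w.
Proof. intro H. apply (proj1 subst_bound_gen w 0); auto; lia. Qed.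
Lemma substV_lift w c s : substV c s (liftV c w) = w.
Proof. apply (proj1 subst_lift_gen). Qed.
Lemma boundV_cl w d : boundV 0 w = true -> boundV d w = true.
Proof. intro H. apply (proj1 bound_mono_gen w 0); auto; lia. Qed.

Definition red (t u : term) (b : nat) := exists m, nsteps m t u /\ m <= b.

Lemma nsteps_trans m1 m2 t u w : nsteps m1 t u -> nsteps m2 u w -> nsteps (m1+m2) t w.
Proof. induction 1; simpl; intros; auto. econstructor; eauto. Qed.
Lemma nsteps_ctx m t u v : nsteps m t u -> nsteps m (App t v) (App u v).
Proof. induction 1; econstructor; eauto. constructor; auto. Qed.

Lemma red_refl t : red t t 0.
Proof. exists 0; split; [constructor|lia]. Qed.
Lemma red_step t t' u b : step_det t t' -> red t' u b -> red t u (S b).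
Proof. intros H [m [H1 H2]]. exists (S m); split; [econstructor; eauto|lia]. Qed.
Lemma red_trans t u w b1 b2 : red t u b1 -> red u w b2 -> red t w (b1 + b2).
Proof. intros [m1 [H1 H1']] [m2 [H2 H2']]. exists (m1+m2); split; [eapply nsteps_trans; eauto|lia]. Qed.
Lemma red_mono t u b b' : red t u b -> b <= b' -> red t u b'.
Proof. intros [m [H1 H2]] H. exists m; split; auto; lia. Qed.
Lemma red_ctx t u v b : red t u b -> red (App t v) (App u v) b.
Proof. intros [m [H1 H2]]. exists m; split; auto. apply nsteps_ctx; auto. Qed.

Inductive nt := V (s : string) | L (s : string) (b : nt) | Ap (f a : nt) | K (v : value).
Fixpoint idx (x : string) (ctx : list string) : nat :=
  match ctx with [] => 1000 | y :: c => if String.eqb x y then 0 else S (idx x c) end.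
Fixpoint compT (ctx : list string) (e : nt) {struct e} : term :=
  match e with
  | Ap f a => App (compT ctx f) (compV ctx a)
  | V x => Val (Var (idx x ctx))
  | L x b => Val (Lam (compT (x :: ctx) b))
  | K v => Val v
  end
with compV (ctx : list string) (e : nt) {struct e} : value :=
  match e with
  | V x => Var (idx x ctx)
  | L x b => Lam (compT (x :: ctx) b)
  | K v => v
  | Ap _ _ => Var 1000
  end.
Definition lams (xs : list string) (b : nt) := fold_right L b xs.
Definition aps (f : nt) (xs : list nt) := fold_left Ap xs f.

Fixpoint stepf (t : term) : option term :=
  match t with
  | Val _ => None
  | App (Val (Lam b)) v => Some (substT 0 v b)
  | App (Val (Var _)) _ => None
  | App t1 v => match stepf t1 with Some t1' => Some (App t1' v) | None => None end
  end.
Fixpoint evalf (fuel : nat) (t : term) (n : nat) : term * nat :=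
  match fuel with 0 => (t, n) | S f => match stepf t with None => (t, n) | Some t' => evalf f t' (S n) end end.


Definition eps2N := lams ["z0";"z1";"ze"] (V "ze").
Definition oneN r := lams ["z0";"z1";"ze"] (Ap (V "z1") r).
Definition zeroN r := lams ["z0";"z1";"ze"] (Ap (V "z0") r).
Definition eps3N := lams ["w0";"w1";"w2";"we"] (V "we").
Definition wconsN (j : nat) r :=
  lams ["w0";"w1";"w2";"we"] (Ap (V (match j with 0 => "w0" | 1 => "w1" | _ => "w2" end)) r).
Definition wcharN (j : nat) := lams ["w0";"w1";"w2"] (V (match j with 0 => "w0" | 1 => "w1" | _ => "w2" end)).

Definition INC : value := Eval vm_compute in compV [] (lams ["self";"n";"k"] (aps (V "n") [
  L "r" (lams ["self";"k"] (Ap (V "k") (oneN (V "r")))) ;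
  L "r" (lams ["self";"k"] (aps (V "self") [V "self"; V "r"; L "r'" (Ap (V "k") (zeroN (V "r'")))])) ;
  lams ["self";"k"] (Ap (V "k") (oneN eps2N)) ; V "self"; V "k"])).

Definition DEC : value := Eval vm_compute in compV [] (lams ["self";"n";"k"] (aps (V "n") [
  L "r" (lams ["self";"k"] (aps (V "self") [V "self"; V "r"; L "r'" (Ap (V "k") (oneN (V "r'")))])) ;
  L "r" (lams ["self";"k"] (aps (V "r") [
     L "q" (lams ["k";"r"] (Ap (V "k") (zeroN (V "r")))) ;
     L "q" (lams ["k";"r"] (Ap (V "k") (zeroN (V "r")))) ;
     lams ["k";"r"] (Ap (V "k") eps2N) ; V "k" ; V "r"])) ;
  lams ["self";"k"] (Ap (V "k") eps2N) ; V "self"; V "k"])).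

Definition TAIL : value := Eval vm_compute in compV [] (
  let B := L "r" (lams ["k";"l"] (Ap (V "k") (V "r"))) in
  lams ["l";"k"] (aps (V "l") [B;B;B;B; lams ["k";"l"] (Ap (V "k") (V "l")); V "k"; V "l"])).

Definition DROP_ (tl : value) : value := Eval vm_compute in compV [] (
  lams ["self";"n";"l";"k"] (aps (V "n") [
   L "r" (lams ["self";"l";"k"] (aps (V "self") [V "self"; V "r"; V "l";
        L "l1" (aps (V "self") [V "self"; V "r"; V "l1"; V "k"])]));
   L "r" (lams ["self";"l";"k"] (aps (K tl) [V "l"; L "l0" (aps (V "self") [V "self"; V "r"; V "l0";
        L "l1" (aps (V "self") [V "self";V "r";V "l1";V "k"])])]));
   lams ["self";"l";"k"] (Ap (V "k") (V "l")); V "self"; V "l"; V "k"])).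
Definition DROP := DROP_ TAIL.

Definition CONSG : value := Eval vm_compute in compV [] (
  let C j := lams ["r";"k"] (Ap (V "k") (wconsN j (V "r"))) in
  lams ["a";"r";"k"] (aps (V "a") [C 0; C 1; C 2; V "r"; V "k"])).

Definition MS : value := Eval vm_compute in compV [] (
  lams ["a";"wl";"wr";"k"] (aps (V "k") [V "wl"; V "a"; V "wr"])).

Definition ML_ (cg : value) : value := Eval vm_compute in compV [] (
  let Bl j := L "r" (lams ["k";"wr2"] (aps (V "k") [V "r"; wcharN j; V "wr2"])) in
  lams ["a";"wl";"wr";"k"] (aps (K cg) [V "a"; V "wr"; L "wr2" (aps (V "wl")
     [Bl 0; Bl 1; Bl 2; lams ["k";"wr2"] (aps (V "k") [eps3N; wcharN 2; V "wr2"]); V "k"; V "wr2"])])).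
Definition ML := ML_ CONSG.

Definition MR_ (cg : value) : value := Eval vm_compute in compV [] (
  let Br j := L "r" (lams ["k";"wl2"] (aps (V "k") [V "wl2"; wcharN j; V "r"])) in
  lams ["a";"wl";"wr";"k"] (aps (K cg) [V "a"; V "wl"; L "wl2" (aps (V "wr")
     [Br 0; Br 1; Br 2; lams ["k";"wl2"] (aps (V "k") [V "wl2"; wcharN 2; eps3N]); V "k"; V "wl2"])])).
Definition MR := MR_ CONSG.

Definition NP_ (f : value) : value := Eval vm_compute in compV [] (
  lams ["n";"k"] (aps (K f) [K f; V "n"; V "k"])).
Definition NPINC := NP_ INC.
Definition NPDEC := NP_ DEC.
Definition NPID : value := Eval vm_compute in compV [] (lams ["n";"k"] (Ap (V "k") (V "n"))).

Definition STEPE (np mu a s : value) : value := Eval vm_compute in compV [] (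
  lams ["i";"n";"wl";"wr"] (aps (K np) [V "n"; L "n2" (aps (K mu) [K a; V "wl"; V "wr";
    lams ["wl2";"a2";"wr2"] (lams ["self";"k"] (aps (V "self") [V "self"; V "k";
       L "x" (aps (V "x") [V "i"; V "n2"; V "wl2"; V "a2"; V "wr2"; K s])]))])])).

Definition TBV (e0 e1 e2 : value) : value := Eval vm_compute in compV [] (
  L "r" (L "a" (aps (V "a") [K e0; K e1; K e2]))).

Definition IDV : value := Lam (Val (Var 0)).

Definition RUN_ (drop t0 t1 t2 t3 : value) : value := Eval vm_compute in compV [] (
  lams ["i";"n";"wl";"a";"wr";"s"] (aps (K drop) [K drop; V "n"; V "i";
    L "suf" (aps (V "suf") [K t0; K t1; K t2; K t3; K IDV; V "a"; V "i"; V "n"; V "wl"; V "wr"])])).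
Definition RUN := RUN_ DROP.

Definition HALT : value := Eval vm_compute in compV [] (
  lams ["i";"n";"wl";"a";"wr";"s"] (lams ["self";"k"] (Ap (V "k")
     (L "x" (aps (V "x") [V "i";V "n";V "wl";V "a";V "wr";V "s"]))))).

Fixpoint apps (t : term) (l : list value) : term :=
  match l with [] => t | v :: l' => apps (App t v) l' end.

Definition BRT (brs : list value) : value := Lam (apps (Val (Var 0)) brs).

Definition HD (brt : value) : value := Eval vm_compute in compV [] (
  lams ["i";"n";"wl";"a";"wr";"s"] (aps (K brt) [V "s"; V "i"; V "n"; V "wl"; V "a"; V "wr"; V "s"])).

Definition AV (hd : value) : value := Eval vm_compute in compV [] (
  lams ["self";"k";"c"] (aps (V "c") [K hd; V "self"; V "k"])).

Close Scope string_scope.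

Definition np_of (d : in_dir) : value :=
  match d with Dp1 => NPINC | Dm1 => NPDEC | D0 => NPID end.
Definition mv_of (mu : w_dir) : value :=
  match mu with WLeft => ML | WRight => MR | WStay => MS end.

Lemma bound_nlam n t d : boundT d (nlam n t) = boundT (n + d) t.
Proof. revert d; induction n; intros; simpl; auto. rewrite IHn. f_equal. lia. Qed.

Lemma enc_str_cl p s : boundV 0 (enc_str p s) = true.
Proof.
  induction s; simpl; unfold lamsV; simpl; rewrite bound_nlam; simpl.
  - apply Nat.ltb_lt. lia.
  - rewrite boundV_cl; auto. rewrite Bool.andb_true_r. apply Nat.ltb_lt. lia.
Qed.

Lemma enc_char_cl p j : 0 < p -> boundV 0 (enc_char p j) = true.
Proof. intro H. unfold enc_char, lamsV. simpl. rewrite bound_nlam. simpl. apply Nat.ltb_lt. lia. Qed.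

Ltac clt := first [assumption | apply enc_str_cl | (apply enc_char_cl; lia) | reflexivity].

Ltac clr := repeat (rewrite ?substV_lift; match goal with
  | |- context [liftV ?c ?w] => rewrite (liftV_cl w c) by clt
  | |- context [substV ?j ?s ?w] => rewrite (substV_cl w j s) by clt
  end).

Ltac stp := match goal with
  | |- step_det (App (Val (Lam _)) _) _ => apply step_beta
  | |- step_det (App (Val _) _) _ => apply step_beta
  | |- step_det (App _ _) _ => apply step_ctx; stp end.
Ltac clean := cbn [substT substV liftT liftV Nat.eqb Nat.ltb Nat.leb Nat.pred nlam lamsV Nat.sub]; clr.
Ltac rs := cbn [enc_str enc_char lamsV nlam Nat.sub]; eapply red_step; [stp | clean].
Ltac rss := repeat rs.
Ltac clos := cbn [boundV boundT Nat.ltb Nat.leb andb nlam lamsV Nat.sub]; repeat match goal with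
   |- context [boundV ?d ?x] => (rewrite (boundV_cl x d) by clt) end; cbn [andb]; reflexivity.
Lemma Forall_skipn {A} (P : A -> Prop) n l : Forall P l -> Forall P (skipn n l).
Proof. revert l; induction n; intros l H; simpl; auto. destruct H; simpl; auto. Qed.
Lemma Forall_tl_ {A} (P : A -> Prop) l : Forall P l -> Forall P (tl l).
Proof. destruct 1; simpl; auto. Qed.
Ltac side := first [solve [repeat first [assumption | apply Forall_skipn | apply Forall_tl_]] | clos].
Ltac go H := first [eapply red_trans; [eapply H; side |] | rs; go H].
Ltac fin := first [apply red_refl | rs; fin].

Fixpoint incb (l : list nat) : list nat :=
  match l with [] => [1] | 0 :: r => 1 :: r | _ :: r => 0 :: incb r end.

Lemma INC_spec bits kk : Forall (fun b => b <= 1) bits -> boundV 0 kk = true ->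
  red (App (App (App (Val INC) INC) (enc_str 2 bits)) kk) (App (Val kk) (enc_str 2 (incb bits)))
      (20 * (length bits + 1)).
Proof.
  intros Hb; revert kk; induction Hb as [|b bits Hb1 Hb IH]; intros kk Hk.
  - eapply red_mono. { fin. } lia.
  - destruct b as [|[|b]]; [| |lia].
    + eapply red_mono. { fin. } simpl; lia.
    + eapply red_mono. { go IH. fin. } simpl. lia.
Qed.

Fixpoint decb (l : list nat) : list nat :=
  match l with [] => [] | 0 :: r => 1 :: decb r | _ :: [] => [] | _ :: r => 0 :: r end.

Lemma DEC_spec bits kk : Forall (fun b => b <= 1) bits -> boundV 0 kk = true ->
  red (App (App (App (Val DEC) DEC) (enc_str 2 bits)) kk) (App (Val kk) (enc_str 2 (decb bits)))
      (30 * (length bits + 1)).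
Proof.
  intros Hb; revert kk; induction Hb as [|b bits Hb1 Hb IH]; intros kk Hk.
  - eapply red_mono. { fin. } lia.
  - destruct b as [|[|b]]; [| |lia].
    + eapply red_mono. { go IH. fin. } simpl. lia.
    + destruct Hb as [|c r Hc Hr].
      * eapply red_mono. { fin. } simpl; lia.
      * destruct c as [|[|c]]; [| |lia]; (eapply red_mono; [fin | simpl; lia]).
Qed.

Lemma TAIL_spec l kk : Forall (fun b => b <= 3) l -> boundV 0 kk = true ->
  red (App (App (Val TAIL) (enc_str 4 l)) kk) (App (Val kk) (enc_str 4 (tl l))) 10.
Proof.
  intros Hl Hk. destruct Hl as [|x l Hx Hl].
  - eapply red_mono; [fin|lia].
  - destruct x as [|[|[|[|x]]]]; try lia; (eapply red_mono; [fin | lia]).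
Qed.

Fixpoint valb (l : list nat) : nat := match l with [] => 0 | b :: r => b + 2 * valb r end.

Lemma red_eq t u u' b : u = u' -> red t u b -> red t u' b.
Proof. intros ->; auto. Qed.

Lemma DROP_spec bits l kk : Forall (fun b => b <= 1) bits -> Forall (fun b => b <= 3) l ->
  boundV 0 kk = true ->
  red (App (App (App (App (Val DROP) DROP) (enc_str 2 bits)) (enc_str 4 l)) kk)
      (App (Val kk) (enc_str 4 (skipn (valb bits) l))) (60 * 2 ^ (length bits) - 30).
Proof.
  intros Hb; revert l kk; induction Hb as [|b bits Hb1 Hb IH]; intros l kk Hl Hk.
  - eapply red_mono. { unfold DROP, DROP_. fin. } simpl; lia.
  - assert (P := Nat.pow_nonzero 2 (length bits)).
    destruct b as [|[|b]]; [| |lia].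
    + eapply red_mono. { unfold DROP at 1, DROP_ at 1. go IH. go IH. 
        eapply red_eq; [| fin]. simpl valb. rewrite skipn_skipn. f_equal. f_equal. f_equal. lia. }
      simpl length. rewrite Nat.pow_succ_r'. lia.
    + eapply red_mono. { unfold DROP at 1, DROP_ at 1. go TAIL_spec. go IH. go IH.
        eapply red_eq; [| fin]. simpl valb. rewrite !skipn_skipn.
        replace (tl l) with (skipn 1 l) by (destruct l; reflexivity). rewrite skipn_skipn.
        f_equal. f_equal. f_equal. lia. }
      simpl length. rewrite Nat.pow_succ_r'. lia.
Qed.

Lemma bin_pos_succ q : bin_pos (Pos.succ q) = incb (bin_pos q).
Proof. induction q; simpl; auto. rewrite IHq; auto. Qed.

Lemma bin_S n : bin (S n) = incb (bin n).
Proof.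
  unfold bin. rewrite Nat2N.inj_succ. destruct (N.of_nat n); simpl; auto.
  apply bin_pos_succ.
Qed.

Lemma bin_pos_ne q : bin_pos q <> [].
Proof. destruct q; simpl; congruence. Qed.

Lemma decl_incl_pos q : decb (incb (bin_pos q)) = bin_pos q.
Proof.
  induction q; simpl; auto.
  - rewrite IHq. reflexivity.
  - destruct (bin_pos q) eqn:E; [destruct (bin_pos_ne _ E)|reflexivity].
Qed.

Lemma bin_dec n : bin n = decb (bin (S n)).
Proof.
  rewrite bin_S. unfold bin. destruct (N.of_nat n); [reflexivity|].
  rewrite decl_incl_pos; auto.
Qed.

Lemma bin_pos_bits q : Forall (fun b => b <= 1) (bin_pos q).
Proof. induction q; simpl; auto. Qed.
Lemma bin_bits n : Forall (fun b => b <= 1) (bin n).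
Proof. unfold bin. destruct (N.of_nat n); auto using bin_pos_bits. Qed.

Lemma valb_pos q : valb (bin_pos q) = Pos.to_nat q.
Proof. induction q; simpl; rewrite ?IHq; lia. Qed.
Lemma valb_bin n : valb (bin n) = n.
Proof. unfold bin. destruct (N.of_nat n) eqn:E; simpl.
  - destruct n; [auto| discriminate].
  - rewrite valb_pos. rewrite <- (Nat2N.id n), E. reflexivity.
Qed.

Lemma len_pos q : length (bin_pos q) <= Pos.to_nat q /\ 2 ^ length (bin_pos q) <= 2 * Pos.to_nat q.
Proof.
  induction q; cbn [bin_pos length].
  - rewrite Pos2Nat.inj_xI. rewrite Nat.pow_succ_r'. pose proof (Pos2Nat.is_pos q). lia.
  - rewrite Pos2Nat.inj_xO. rewrite Nat.pow_succ_r'. pose proof (Pos2Nat.is_pos q). lia.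
  - simpl. lia.
Qed.
Lemma len_bin n : length (bin n) <= n /\ 2 ^ length (bin n) <= 2 * n + 1.
Proof. unfold bin. destruct (N.of_nat n) eqn:E; simpl.
  - lia.
  - pose proof (len_pos p). assert (Pos.to_nat p = n) by (rewrite <- (Nat2N.id n), E; reflexivity). lia.
Qed.

Ltac side ::= first [solve [repeat first [eassumption | apply Forall_skipn | apply Forall_tl_ | apply bin_bits]] | clos].

Lemma NP_spec d n n' kk : new_pos d n n' -> boundV 0 kk = true ->
  red (App (App (Val (np_of d)) (enc_str 2 (bin n))) kk) (App (Val kk) (enc_str 2 (bin n'))) (30 * n + 40).
Proof.
  intros Hd Hk. pose proof (len_bin n) as [Hl _].
  destruct d; simpl in Hd; subst.
  - eapply red_mono. { unfold NPDEC, NP_. go DEC_spec. eapply red_eq; [|fin]. rewrite <- bin_dec. reflexivity. }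
    lia.
  - eapply red_mono. { unfold NPINC, NP_. go INC_spec. eapply red_eq; [|fin]. rewrite <- bin_S. reflexivity. } lia.
  - eapply red_mono. { unfold NPID. fin. } lia.
Qed.

Definition encW (l : list bW) := enc_str 3 (map bW_idx l).

Lemma MV_spec mu wl a' wr kk : boundV 0 kk = true ->
  red (App (App (App (App (Val (mv_of mu)) (enc_char 3 (bW_idx a'))) (encW (rev wl))) (encW wr)) kk)
      (let '(wl2, a2, wr2) := move_work mu wl a' wr in
       App (App (App (Val kk) (encW (rev wl2))) (enc_char 3 (bW_idx a2))) (encW wr2)) 40.
Proof.
  intros Hk. unfold encW. destruct mu; simpl move_work.
  - destruct (rev wl) as [|x w] eqn:E.
    + simpl. destruct a'; (eapply red_mono; [unfold ML, ML_; fin | lia]).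
    + rewrite rev_involutive. destruct a', x; (eapply red_mono; [unfold ML, ML_; fin | lia]).
  - destruct wr as [|x w]; rewrite rev_app_distr; simpl rev.
    + destruct a'; (eapply red_mono; [unfold MR, MR_; fin | lia]).
    + destruct a', x; (eapply red_mono; [unfold MR, MR_; fin | lia]).
  - eapply red_mono; [unfold MS; fin | lia].
Qed.

Lemma TBV_cl x y z : boundV 0 x = true -> boundV 0 y = true -> boundV 0 z = true -> boundV 0 (TBV x y z) = true.
Proof. intros. unfold TBV. clos. Qed.
Lemma STEPE_cl a b c d : boundV 0 a = true -> boundV 0 b = true -> boundV 0 c = true -> boundV 0 d = true ->
  boundV 0 (STEPE a b c d) = true.
Proof. intros. unfold STEPE. clos. Qed.
Lemma RUN_cl a b c d : boundV 0 a = true -> boundV 0 b = true -> boundV 0 c = true -> boundV 0 d = true ->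
  boundV 0 (RUN a b c d) = true.
Proof. intros. unfold RUN, RUN_. clos. Qed.

Lemma np_cl d : boundV 0 (np_of d) = true. Proof. destruct d; reflexivity. Qed.
Lemma mv_cl d : boundV 0 (mv_of d) = true. Proof. destruct d; reflexivity. Qed.
Ltac clt ::= first [apply np_cl | apply mv_cl | assumption | apply enc_str_cl | (apply enc_char_cl; lia) | reflexivity
  | (apply TBV_cl; clt) | (apply STEPE_cl; clt) | (apply RUN_cl; clt)].

Lemma MV_spec' mu wl a' wr kk wl2 a2 wr2 : boundV 0 kk = true -> move_work mu wl a' wr = (wl2, a2, wr2) ->
  red (App (App (App (App (Val (mv_of mu)) (enc_char 3 (bW_idx a'))) (encW (rev wl))) (encW wr)) kk)
      (App (App (App (Val kk) (encW (rev wl2))) (enc_char 3 (bW_idx a2))) (encW wr2)) 40.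
Proof. intros Hk E. pose proof (MV_spec mu wl a' wr kk Hk) as H. rewrite E in H. exact H. Qed.

Definition cfg (i n wl a wr s : value) : value :=
  Lam (App (App (App (App (App (App (Val (Var 0)) i) n) wl) a) wr) s).
Definition RV (c : value) : value :=
  Lam (Val (Lam (App (App (App (Val (Var 1)) (Var 1)) (Var 0)) c))).

Definition encI (l : list bI) := enc_str 4 (map bI_idx l).
Definition encN (n : nat) := enc_str 2 (bin n).

Lemma STEPE_spec d mu a' S' iv n n' wl wr wl2 a2 wr2 :
  boundV 0 S' = true -> boundV 0 iv = true -> new_pos d n n' -> move_work mu wl a' wr = (wl2, a2, wr2) ->
  red (App (App (App (App (Val (STEPE (np_of d) (mv_of mu) (enc_char 3 (bW_idx a')) S')) iv) (encN n))
             (encW (rev wl))) (encW wr))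
      (Val (RV (cfg iv (encN n') (encW (rev wl2)) (enc_char 3 (bW_idx a2)) (encW wr2) S')))
      (30 * n + 100).
Proof.
  intros HS Hi Hd Hm. unfold encN.
  eapply red_mono. { unfold STEPE. go NP_spec. go MV_spec'. fin. } lia.
Qed.

Lemma Forall_bI l : Forall (fun b => b <= 3) (map bI_idx l).
Proof. induction l as [|x l IH]; simpl; constructor; auto. destruct x; simpl; lia. Qed.
Ltac side ::= first [solve [repeat first [eassumption | apply Forall_skipn | apply Forall_tl_ | apply bin_bits | apply Forall_bI]] | clos].

Lemma nth_skipn {A} (l : list A) n b : nth_error l n = Some b -> exists r, skipn n l = b :: r.
Proof.
  revert l; induction n; intros [|x l] H; simpl in *; try discriminate.
  - inversion H; subst; eauto.
  - eauto.
Qed.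

Lemma skipn_map' {A B} (f : A -> B) n l : skipn n (map f l) = map f (skipn n l).
Proof. revert l; induction n; intros [|x l]; simpl; auto. Qed.

Lemma RUN_spec (e : bI -> bW -> value) il n wl a wr s b :
  (forall b a, boundV 0 (e b a) = true) -> boundV 0 s = true ->
  nth_error il n = Some b ->
  red (App (App (App (App (App (App (Val (RUN (TBV (e I0 W0) (e I0 W1) (e I0 WB)) (TBV (e I1 W0) (e I1 W1) (e I1 WB))
        (TBV (e IL W0) (e IL W1) (e IL WB)) (TBV (e IR W0) (e IR W1) (e IR WB)))) (encI il)) (encN n))
        (encW (rev wl))) (enc_char 3 (bW_idx a))) (encW wr)) s)
      (App (App (App (App (Val (e b a)) (encI il)) (encN n)) (encW (rev wl))) (encW wr))
      (60 * 2 ^ length (bin n) + 30).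
Proof.
  intros He Hs Hn.
  pose proof (He I0 W0). pose proof (He I0 W1). pose proof (He I0 WB).
  pose proof (He I1 W0). pose proof (He I1 W1). pose proof (He I1 WB).
  pose proof (He IL W0). pose proof (He IL W1). pose proof (He IL WB).
  pose proof (He IR W0). pose proof (He IR W1). pose proof (He IR WB).
  destruct (nth_skipn _ _ _ Hn) as [r Hr].
  assert (P := Nat.pow_nonzero 2 (length (bin n))).
  eapply red_mono. { unfold RUN, RUN_. unfold encN at 1. unfold encI at 1. go DROP_spec.
    rewrite valb_bin, skipn_map', Hr. simpl map.
    destruct b, a; fin. }
  lia.
Qed.

Lemma red_apps t t' l b : red t t' b -> red (apps t l) (apps t' l) b.
Proof. revert t t'; induction l; intros; simpl; auto. apply IHl. apply red_ctx; auto. Qed.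

Lemma red_step_apps t t' l u b : step_det t t' -> red (apps t' l) u b -> red (apps t l) u (S b).
Proof. intros H1 H2. apply (red_trans _ (apps t' l) _ 1 b); [|exact H2]. apply red_apps. eapply red_step; [exact H1|apply red_refl]. Qed.

Lemma subst_apps j s t l : substT j s (apps t l) = apps (substT j s t) (map (substV j s) l).
Proof. revert t; induction l; intros; simpl; [reflexivity | apply IHl]. Qed.

Lemma map_cl j s l : Forall (fun v => boundV 0 v = true) l -> map (substV j s) l = l.
Proof. induction 1; simpl; auto. rewrite substV_cl; auto. congruence. Qed.

Lemma bound_apps d t l : boundT d (apps t l) = andb (boundT d t) (forallb (boundV d) l).
Proof. revert t; induction l; intros; simpl. rewrite Bool.andb_true_r; auto.
  rewrite IHl. simpl. rewrite Bool.andb_assoc. reflexivity. Qed.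

Lemma subst_nlam n j v t : boundV 0 v = true -> substT j v (nlam n t) = nlam n (substT (n + j) v t).
Proof.
  intro Hv. revert j; induction n; intros; simpl; auto.
  rewrite liftV_cl; auto. rewrite IHn. rewrite <- plus_n_Sm. reflexivity.
Qed.

Lemma CONST_spec n w vs : length vs = n -> Forall (fun v => boundV 0 v = true) vs -> boundV 0 w = true ->
  red (apps (nlam n (Val w)) vs) (Val w) n.
Proof.
  revert vs; induction n; intros vs Hl Hf Hw.
  - destruct vs; simpl in *; try discriminate. apply red_refl.
  - destruct vs as [|v vs]; simpl in *; try discriminate. inversion Hf; subst.
    apply red_step_apps with (t' := substT 0 v (nlam n (Val w))). { apply step_beta. }
    rewrite subst_nlam by auto. simpl. rewrite substV_cl by auto.
    apply IHn; auto.
Qed.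

Lemma SEL_spec n x vs : length vs = S n -> Forall (fun v => boundV 0 v = true) vs -> x <= n ->
  red (apps (Val (Lam (nlam n (Val (Var x))))) vs) (Val (nth (n - x) vs IDV)) (S n).
Proof.
  revert x vs; induction n; intros x vs Hl Hf Hx.
  - destruct vs as [|v [|]]; simpl in *; try discriminate. inversion Hf; subst.
    assert (x = 0) by lia; subst. eapply red_step. { apply step_beta. } simpl. apply red_refl.
  - destruct vs as [|v vs]; simpl in Hl; try discriminate. inversion Hf; subst. simpl apps.
    apply red_step_apps with (t' := substT 0 v (nlam (S n) (Val (Var x)))). { apply step_beta. }
    rewrite subst_nlam; auto. cbn [substT substV]. rewrite Nat.add_0_r.
    destruct (Nat.eqb_spec x (S n)).
    + subst. replace (S n - S n) with 0 by lia. simpl nth.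
      eapply red_mono. { apply CONST_spec; auto. } lia.
    + destruct (Nat.ltb_spec (S n) x); [lia|].
      replace (S n - x) with (S (n - x)) by lia. simpl nth. simpl nlam.
      apply IHn; auto. lia.
Qed.

Lemma START_spec hd i n wl a wr s k :
  boundV 0 hd = true -> boundV 0 i = true -> boundV 0 n = true -> boundV 0 wl = true ->
  boundV 0 a = true -> boundV 0 wr = true -> boundV 0 s = true ->
  red (App (App (App (Val (AV hd)) (AV hd)) k) (cfg i n wl a wr s))
      (App (App (apps (Val hd) [i;n;wl;a;wr;s]) (AV hd)) k) 4.
Proof. intros. unfold AV. simpl apps. fin. Qed.

Lemma HALT_spec A i n wl a wr s k :
  boundV 0 A = true -> boundV 0 i = true -> boundV 0 n = true -> boundV 0 wl = true ->
  boundV 0 a = true -> boundV 0 wr = true -> boundV 0 s = true ->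
  red (App (App (apps (Val HALT) [i;n;wl;a;wr;s]) A) k) (App (Val k) (cfg i n wl a wr s)) 8.
Proof. intros. simpl apps. unfold cfg. fin. Qed.

Lemma FINISH_spec A c k : boundV 0 A = true -> boundV 0 c = true ->
  red (App (App (Val (RV c)) A) k) (App (App (App (Val A) A) k) c) 2.
Proof. intros. unfold RV. fin. Qed.

Lemma HDSEL_spec brs mm j i n wl a wr :
  Forall (fun v => boundV 0 v = true) brs -> length brs = S mm -> j <= mm ->
  boundV 0 (BRT brs) = true ->
  boundV 0 i = true -> boundV 0 n = true -> boundV 0 wl = true ->
  boundV 0 a = true -> boundV 0 wr = true ->
  let s := Lam (nlam mm (Val (Var (mm - j)))) in
  red (apps (Val (HD (BRT brs))) [i;n;wl;a;wr;s]) (apps (Val (nth j brs IDV)) [i;n;wl;a;wr;s]) (mm + 10).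
Proof.
  intros Hf Hl Hj Hb Hi Hn Hwl Ha Hwr s.
  assert (Hs : boundV 0 s = true).
  { unfold s. cbn. rewrite bound_nlam. simpl. apply Nat.ltb_lt. lia. }
  eapply red_mono. {
    unfold HD. simpl apps. rs. rs. rs. rs. rs. rs.
    match goal with |- red _ _ ?b => change (red (apps (App (Val (BRT brs)) s) [i;n;wl;a;wr;s]) (apps (Val (nth j brs IDV)) [i;n;wl;a;wr;s]) b) end.
    apply red_step_apps with (t' := substT 0 s (apps (Val (Var 0)) brs)). { apply step_beta. }
    rewrite subst_apps, map_cl by auto. cbn [substT substV Nat.eqb].
    apply red_apps. unfold s. eapply red_eq; [|apply SEL_spec; auto].
    f_equal. f_equal. lia. lia. }
  lia.
Qed.

From Stdlib Require Import Reals Lra.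

Lemma real_bound mm L K : (2 <= L)%nat -> (mm <= K * L)%nat ->
  (INR mm <= INR K * INR L * log2R (INR L))%R.
Proof.
  intros HL Hm.
  assert (H2 : (2 <= INR L)%R) by (replace 2%R with (INR 2) by (simpl; lra); apply le_INR; lia).
  assert (Hl2 : (0 < ln 2)%R) by (rewrite <- ln_1; apply ln_increasing; lra).
  assert (Hlog : (1 <= log2R (INR L))%R).
  { unfold log2R. assert (ln 2 <= ln (INR L))%R by (destruct (Rle_lt_or_eq_dec _ _ H2) as [h|h]; [left; apply ln_increasing; lra | rewrite h; lra]).
    apply (Rmult_le_reg_r (ln 2)); auto. unfold Rdiv. rewrite Rmult_assoc, Rinv_l; lra. }
  apply le_INR in Hm. rewrite mult_INR in Hm.
  assert (0 <= INR K * INR L)%R by (apply Rmult_le_pos; apply pos_INR).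
  apply Rle_trans with (INR K * INR L)%R; auto.
  rewrite <- (Rmult_1_r (INR K * INR L)) at 1. apply Rmult_le_compat_l; auto.
Qed.

From mathcomp Require Import ssreflect ssrbool eqtype fintype.
From mathcomp Require seq ssrnat.
Definition entry (M : TM) (b : bI) (a : bW) (j : 'I_(tm_m M)) : value :=
  match tm_delta M b a j with
  | Some (d, a', mu, s') => STEPE (np_of d) (mv_of mu) (enc_char 3 (bW_idx a')) (enc_char (tm_m M) s')
  | None => IDV
  end.
Definition tb (M : TM) (b : bI) (j : 'I_(tm_m M)) : value :=
  TBV (entry M b W0 j) (entry M b W1 j) (entry M b WB j).
Definition br (M : TM) (j : 'I_(tm_m M)) : value :=
  if (j == tm_T M) || (j == tm_F M) then HALT
  else RUN (tb M I0 j) (tb M I1 j) (tb M IL j) (tb M Defs.IR j).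
Definition AM (M : TM) : value := AV (HD (BRT (map (br M) (enum 'I_(tm_m M))))).
Definition transT (M : TM) : term := App (Val (AM M)) (AM M).

Lemma map_seq_map {A B} (f : A -> B) l : List.map f l = seq.map f l.
Proof. induction l; simpl; congruence. Qed.
Lemma nth_seq_nth {A} (l : list A) k d : List.nth k l d = seq.nth d l k.
Proof. revert k; induction l; intros [|k]; simpl; auto. Qed.
Lemma length_size {A} (l : list A) : List.length l = seq.size l.
Proof. induction l; simpl; congruence. Qed.

Lemma brs_len M : length (List.map (br M) (enum 'I_(tm_m M))) = tm_m M.
Proof. rewrite length_map length_size. apply size_enum_ord. Qed.

Lemma brs_nth M (o : 'I_(tm_m M)) : List.nth (nat_of_ord o) (List.map (br M) (enum 'I_(tm_m M))) IDV = br M o.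
Proof.
  rewrite nth_seq_nth map_seq_map. rewrite (seq.nth_map o).
  - by rewrite nth_ord_enum.
  - by rewrite size_enum_ord; apply ltn_ord.
Qed.

Lemma entry_cl M b a j : boundV 0 (entry M b a j) = true.
Proof.
  unfold entry. destruct (tm_delta M b a j) as [[[[d a'] mu] s']|]; [|reflexivity].
  apply STEPE_cl; [apply np_cl|apply mv_cl|apply enc_char_cl; lia|apply enc_char_cl].
  destruct s' as [s' Hs]. simpl. apply/ssrnat.ltP. exact (ssrnat.leq_ltn_trans (ssrnat.leq0n s') Hs).
Qed.

Lemma br_cl M j : boundV 0 (br M j) = true.
Proof.
  unfold br. destruct ((j == tm_T M) || (j == tm_F M)); [reflexivity|].
  unfold tb. apply RUN_cl; apply TBV_cl; apply entry_cl.
Qed.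

Lemma brs_cl M : Forall (fun v => boundV 0 v = true) (List.map (br M) (enum 'I_(tm_m M))).
Proof. apply Forall_forall. intros x Hx. apply in_map_iff in Hx as [j [<- _]]. apply br_cl. Qed.

Lemma forallb_cl l : Forall (fun v => boundV 0 v = true) l -> forallb (boundV 1) l = true.
Proof. induction 1; simpl; auto. rewrite boundV_cl; auto. Qed.

Lemma BRT_cl M : boundV 0 (BRT (List.map (br M) (enum 'I_(tm_m M)))) = true.
Proof. unfold BRT. simpl. rewrite bound_apps. simpl. apply forallb_cl, brs_cl. Qed.

Lemma AM_cl M : boundV 0 (AM M) = true.
Proof. pose proof (BRT_cl M). unfold AM, AV, HD. clos. Qed.

Lemma ord_lt m (j : 'I_m) : nat_of_ord j < m.
Proof. destruct j as [x Hx]. simpl. apply/ssrnat.ltP. exact Hx. Qed.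

Lemma prefix_spec M k C :
  red (App (App (transT M) k) (enc_config C))
      (App (App (apps (Val (br M (c_st C))) [encI (c_in C); encN (c_pos C); encW (rev (c_wl C));
          enc_char 3 (bW_idx (c_a C)); encW (c_wr C); enc_char (tm_m M) (c_st C)]) (AM M)) k)
      (tm_m M + 14).
Proof.
  pose proof (ord_lt _ (c_st C)) as Hj.
  change (enc_config C) with (cfg (encI (c_in C)) (encN (c_pos C)) (encW (rev (c_wl C)))
          (enc_char 3 (bW_idx (c_a C))) (encW (c_wr C)) (enc_char (tm_m M) (c_st C))).
  unfold transT, AM.
  eapply red_mono. { eapply red_trans.
    - apply START_spec; try apply enc_str_cl; try (apply enc_char_cl; lia).
      unfold HD. pose proof (BRT_cl M). clos.
    - apply red_ctx, red_ctx. eapply red_eq; [|apply (HDSEL_spec _ (tm_m M - 1) (c_st C))].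
      + rewrite brs_nth. reflexivity.
      + apply brs_cl.
      + rewrite brs_len. lia.
      + lia.
      + apply BRT_cl.
      + apply enc_str_cl.
      + apply enc_str_cl.
      + apply enc_str_cl.
      + apply enc_char_cl; lia.
      + apply enc_str_cl. }
  lia.
Qed.

Lemma red_nsteps t u b : red t u b -> exists m, nsteps m t u /\ m <= b.
Proof. auto. Qed.

Theorem mainTheorem8 (M : TM) (HM : tm_wf M) (Hin : tm_stays_in M) :
  exists trans : term, closedT trans /\
  exists c : R,
    forall (k : value) (C : config (tm_m M)),
      valid_input (c_in C) ->
      Nat.lt (c_pos C) (length (c_in C)) ->
      (is_final M C ->
         exists m : nat,
           nsteps m (App (App trans k) (enc_config C)) (App (Val k) (enc_config C)) /\
           (INR m <= c * INR (length (c_in C)) * log2R (INR (length (c_in C))))%R) /\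
      (forall D : config (tm_m M), tm_step M C D ->
         exists m : nat,
           nsteps m (App (App trans k) (enc_config C)) (App (App trans k) (enc_config D)) /\
           (INR m <= c * INR (length (c_in C)) * log2R (INR (length (c_in C))))%R).
Proof.
  exists (transT M). split.
  { unfold closedT, transT. cbn [boundT]. rewrite AM_cl. reflexivity. }
  exists (INR (tm_m M + 500)).
  intros k C Hv Hlt.
  assert (HL : 2 <= length (c_in C)).
  { destruct Hv as [s' [_ ->]]. simpl. rewrite length_app. simpl. lia. }
  pose proof (ord_lt _ (c_st C)) as Hj.
  pose proof (prefix_spec M k C) as Hpre.
  pose proof (len_bin (c_pos C)) as [Hb1 Hb2].
  split.
  - intros Hf.
    assert (Hbr : br M (c_st C) = HALT).
    { unfold br. destruct Hf as [-> | ->]; rewrite eqxx; [reflexivity|]. by rewrite orbT. }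
    rewrite Hbr in Hpre.
    destruct (red_trans _ _ _ _ _ Hpre (HALT_spec (AM M) _ _ _ _ _ _ k (AM_cl M)
      (enc_str_cl _ _) (enc_str_cl _ _) (enc_str_cl _ _) (enc_char_cl 3 _ ltac:(lia))
      (enc_str_cl _ _) (enc_char_cl (tm_m M) (c_st C) ltac:(lia)))) as [mm [Hs Hmm]].
    exists mm. split; [exact Hs|].
    apply real_bound; auto. nia.
  - intros D (b & d & a' & mu & s' & Hnth & Hdel & Hin' & Hpos & Hmove & Hst).
    assert (Hnf : c_st C <> tm_T M /\ c_st C <> tm_F M).
    { apply (HM b (c_a C)). rewrite Hdel. discriminate. }
    destruct Hnf as [HnT HnF].
    assert (Hbr : br M (c_st C) = RUN (tb M I0 (c_st C)) (tb M I1 (c_st C)) (tb M IL (c_st C)) (tb M Defs.IR (c_st C))).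
    { unfold br. have -> : (c_st C == tm_T M) = false by apply/eqP.
      have -> : (c_st C == tm_F M) = false by apply/eqP. reflexivity. }
    rewrite Hbr in Hpre.
    assert (Hred : red (App (App (transT M) k) (enc_config C)) (App (App (transT M) k) (enc_config D))
       (tm_m M + 14 + (60 * 2 ^ length (bin (c_pos C)) + 30) + (30 * c_pos C + 100) + 2)).
    { eapply red_trans; [eapply red_trans; [eapply red_trans; [exact Hpre|]|]|].
      - apply red_ctx, red_ctx. simpl apps. unfold tb.
        apply (RUN_spec (fun b a => entry M b a (c_st C))).
        + intros. apply entry_cl.
        + apply enc_char_cl. lia.
        + exact Hnth.
      - apply red_ctx, red_ctx. unfold entry at 1. rewrite Hdel.
        apply STEPE_spec.
        + apply enc_char_cl. pose proof (ord_lt _ s'). lia.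
        + apply enc_str_cl.
        + exact Hpos.
        + symmetry. exact Hmove.
      - eapply red_eq; [|apply FINISH_spec].
        + unfold transT, enc_config, cfg. rewrite Hin' Hst. reflexivity.
        + apply AM_cl.
        + unfold cfg. clos. }
    destruct Hred as [mm [Hs Hmm]].
    exists mm. split; [exact Hs|].
    apply real_bound; auto. nia.
Qed.
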